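(* Let $B$ be a soluble skew left brace and let $I$ be a maximal ideal of $B$ (a proper ideal not contained in any other proper ideal). Then $B/I$ is an abelian brace and its group $(B/I,+)=(B/I,\cdot)$ is cyclic of prime order.
   Context: A skew left brace (brace) is a set $B$ with two group structures $(B,+)$ and $(B,\cdot)$ with $a(b+c)=ab-a+ac$; $\lambda_a(b)=-a+ab$. An ideal is a subset that is a normal subgroup of both groups and $\lambda_b$-invariant for all $b$. For ideals $I,J$, $[I,J]$ is the smallest ideal containing $[I,J]_+$, $[I,J]_\cdot$ and all $ij-(i+j)$; $B$ is abelian if $[B,B]=0$. $B$ is soluble if there is a chain $B=I_0\supseteq\cdots\supseteq I_n=0$ with each $I_i$ an ideal of the brace $I_{i-1}$ and $I_{i-1}/I_i$ abelian. *)

(* Defs.v *)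
From mathcomp Require Import all_boot all_order.
Set Implicit Arguments. Unset Strict Implicit. Unset Printing Implicit Defensive.

Record skew_brace := SkewBrace {
  bcarrier :> Type;
  badd : bcarrier -> bcarrier -> bcarrier;
  bzero : bcarrier;
  bopp : bcarrier -> bcarrier;
  bmul : bcarrier -> bcarrier -> bcarrier;
  bone : bcarrier;
  binv : bcarrier -> bcarrier;
  baddA : forall a b c, badd a (badd b c) = badd (badd a b) c;
  badd0l : forall a, badd bzero a = a;
  badd0r : forall a, badd a bzero = a;
  baddNl : forall a, badd (bopp a) a = bzero;
  baddNr : forall a, badd a (bopp a) = bzero;
  bmulA : forall a b c, bmul a (bmul b c) = bmul (bmul a b) c;
  bmul1l : forall a, bmul bone a = a;
  bmul1r : forall a, bmul a bone = a;
  bmulVl : forall a, bmul (binv a) a = bone;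
  bmulVr : forall a, bmul a (binv a) = bone;
  brace_law : forall a b c,
    bmul a (badd b c) = badd (badd (bmul a b) (bopp a)) (bmul a c)
}.

Section BraceDefs.
Variable B : skew_brace.

Definition bsub (a b : B) : B := badd a (bopp b).

Definition blambda (a b : B) : B := badd (bopp a) (bmul a b).

Fixpoint bnat_mul (n : nat) (g : B) : B :=
  match n with O => bzero B | S m => badd (bnat_mul m g) g end.

(* I is an ideal of the sub-brace S (S itself an ideal of some brace in a
   chain, hence a sub-brace): I is contained in S, is a subgroup of (S,+)
   and of (S,.), normal in both, and lambda_s-invariant for all s in S. *)
Definition ideal_in (S I : B -> Prop) : Prop :=
  (forall x, I x -> S x) /\
  I (bzero B) /\
  (forall x y, I x -> I y -> I (bsub x y)) /\
  (forall x y, I x -> I y -> I (bmul x (binv y))) /\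
  (forall s x, S s -> I x -> I (badd (badd s x) (bopp s))) /\
  (forall s x, S s -> I x -> I (bmul (bmul s x) (binv s))) /\
  (forall s x, S s -> I x -> I (blambda s x)).

Definition ideal (I : B -> Prop) : Prop := ideal_in (fun _ => True) I.

(* The quotient brace S/I (I an ideal of S) is abelian, i.e. [S/I,S/I] = 0.
   Since [S/I,S/I] is the smallest ideal containing the additive
   commutators, multiplicative commutators and the elements ab-(a+b) of S/I,
   it is 0 iff all these generators vanish in S/I, i.e. lie in I when
   computed in S. *)
Definition abelian_quot (S I : B -> Prop) : Prop :=
  forall a b, S a -> S b ->
    [/\ I (badd (badd (badd (bopp a) (bopp b)) a) b),
        I (bmul (bmul (bmul (binv a) (binv b)) a) b) &
        I (bsub (bmul a b) (badd a b))].

Definition soluble : Prop :=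
  exists (n : nat) (I : nat -> B -> Prop),
    [/\ (forall x, I 0 x),
        (forall x, I n x <-> x = bzero B) &
        (forall i, i < n ->
           ideal_in (I i) (I i.+1) /\ abelian_quot (I i) (I i.+1))].

Definition maximal_ideal (I : B -> Prop) : Prop :=
  [/\ ideal I,
      (exists x, ~ I x) &
      (forall J, ideal J -> (forall x, I x -> J x) -> (exists x, ~ J x) ->
         forall x, J x -> I x)].

(* The additive group (B/I,+) is cyclic of order p: there is g such that
   the classes of 0*g, 1*g, ..., (p-1)*g are exactly the classes of B/I,
   each class occurring once. *)
Definition quot_add_cyclic_of_order (I : B -> Prop) (p : nat) : Prop :=
  exists g : B,
    (forall b, exists2 k, k < p & I (bsub b (bnat_mul k g))) /\
    (forall k l, k < p -> l < p ->
       I (bsub (bnat_mul k g) (bnat_mul l g)) -> k = l).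

End BraceDefs.

(* Main.v *)
Require Import Defs.
From mathcomp Require Import all_boot all_order.
From mathcomp Require Import zify.
From Stdlib Require Import Classical.
Set Implicit Arguments. Unset Strict Implicit. Unset Printing Implicit Defensive.

Local Notation "a ⊕ b" := (badd a b) (at level 50, left associativity).
Local Notation "⊖ a" := (bopp a) (at level 35, right associativity).
Local Notation "a ⊙ b" := (bmul a b) (at level 40, left associativity).

Section Grp.
Variable B : skew_brace.
Implicit Types a b c x y : B.

Lemma addKl a b : ⊖a ⊕ (a ⊕ b) = b.
Proof. by rewrite baddA baddNl badd0l. Qed.
Lemma addNKl a b : a ⊕ (⊖a ⊕ b) = b.
Proof. by rewrite baddA baddNr badd0l. Qed.
Lemma addKr a b : a ⊕ b ⊕ ⊖b = a.
Proof. by rewrite -baddA baddNr badd0r. Qed.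
Lemma addNKr a b : a ⊕ ⊖b ⊕ b = a.
Proof. by rewrite -baddA baddNl badd0r. Qed.
Lemma opp_uniq a b : a ⊕ b = bzero B -> b = ⊖a.
Proof. by move=> h; rewrite -(addKl a b) h badd0r. Qed.
Lemma oppK a : ⊖ ⊖ a = a.
Proof. by symmetry; apply: opp_uniq; rewrite baddNl. Qed.
Lemma opp0 : ⊖ bzero B = bzero B.
Proof. by symmetry; apply: opp_uniq; rewrite badd0l. Qed.
Lemma oppD a b : ⊖(a ⊕ b) = ⊖b ⊕ ⊖a.
Proof. by symmetry; apply: opp_uniq; rewrite baddA addKr baddNr. Qed.

Lemma mulKl a b : binv a ⊙ (a ⊙ b) = b.
Proof. by rewrite bmulA bmulVl bmul1l. Qed.
Lemma mulKr a b : a ⊙ b ⊙ binv b = a.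
Proof. by rewrite -bmulA bmulVr bmul1r. Qed.
Lemma inv_uniq a b : a ⊙ b = bone B -> b = binv a.
Proof. by move=> h; rewrite -(mulKl a b) h bmul1r. Qed.
Lemma invK a : binv (binv a) = a.
Proof. by symmetry; apply: inv_uniq; rewrite bmulVl. Qed.

Lemma one0 : bone B = bzero B.
Proof.
have h := brace_law (bone B) (bzero B) (bzero B).
rewrite badd0l !bmul1l badd0r badd0l in h.
by rewrite -(oppK (bone B)) -h opp0.
Qed.

Lemma mul0 a : a ⊙ bzero B = a.
Proof.
have h := brace_law a (bzero B) (bzero B).
rewrite badd0l in h.
have h2 := congr1 (fun z => z ⊕ ⊖(a ⊙ bzero B)) h.
rewrite /= baddNr addKr in h2.
by rewrite -(addNKr (a ⊙ bzero B) a) -h2 badd0l.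
Qed.

Lemma mulN a b : a ⊙ ⊖b = ⊖(a ⊙ b ⊕ ⊖a) ⊕ a.
Proof.
have h := brace_law a b (⊖b).
rewrite baddNr mul0 in h.
have := congr1 (fun z => ⊖(a ⊙ b ⊕ ⊖a) ⊕ z) h.
by rewrite /= addKl => ->.
Qed.

Lemma lamM a b c : blambda a (blambda b c) = blambda (a ⊙ b) c.
Proof.
rewrite /blambda brace_law mulN addKr oppD oppK -bmulA.
by rewrite -(baddA a) addKl.
Qed.

Lemma lam1 c : blambda (bone B) c = c.
Proof. by rewrite /blambda bmul1l one0 opp0 badd0l. Qed.
Lemma lamK a c : blambda (binv a) (blambda a c) = c.
Proof. by rewrite lamM bmulVl lam1. Qed.

Lemma bnat_mulD k l (g : B) : bnat_mul (k + l) g = bnat_mul k g ⊕ bnat_mul l g.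
Proof.
elim: l => [|l IH]; first by rewrite addn0 /= badd0r.
by rewrite addnS /= IH baddA.
Qed.
Lemma bnat_mulM k d (g : B) : bnat_mul k (bnat_mul d g) = bnat_mul (k * d) g.
Proof.
elim: k => [|k IH]; first by rewrite mul0n.
by rewrite /= IH mulSnr bnat_mulD.
Qed.

End Grp.

Lemma ex_min (P : nat -> Prop) : (exists n, P n) -> exists m, P m /\ forall k, k < m -> ~ P k.
Proof.
move=> [n Pn]; apply: NNPP => hno.
have : forall j k, k <= j -> ~ P k.
  elim=> [|j IH] k hk Pk.
    apply: hno; exists k; split=> // i hi; lia.
  apply: hno; exists k; split=> // i hi Pi.
  by apply: (IH i) => //; lia.
by move/(_ n n (leqnn n)).
Qed.

Section Main.
Variables (B : skew_brace) (I : B -> Prop).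
Hypothesis HI : ideal I.
Implicit Types a b c x y s : B.

Lemma I0 : I (bzero B). Proof. by case: HI => _ []. Qed.
Lemma Isub x y : I x -> I y -> I (x ⊕ ⊖y).
Proof. by case: HI => _ [_ [h _]]; apply: h. Qed.
Lemma Iconj s x : I x -> I (s ⊕ x ⊕ ⊖s).
Proof. by case: HI => _ [_ [_ [_ [h _]]]]; apply: h. Qed.
Lemma Imconj s x : I x -> I (s ⊙ x ⊙ binv s).
Proof. by case: HI => _ [_ [_ [_ [_ [h _]]]]]; apply: h. Qed.
Lemma Ilam s x : I x -> I (blambda s x).
Proof. by case: HI => _ [_ [_ [_ [_ [_ h]]]]]; apply: h. Qed.

Lemma Iopp x : I x -> I (⊖x).
Proof. by move=> h; have := Isub I0 h; rewrite badd0l. Qed.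
Lemma Iadd x y : I x -> I y -> I (x ⊕ y).
Proof. by move=> hx hy; have := Isub hx (Iopp hy); rewrite oppK. Qed.
Lemma IconjN s x : I x -> I (⊖s ⊕ x ⊕ s).
Proof. by move=> h; have := Iconj (⊖s) h; rewrite oppK. Qed.

Definition eqv x y := I (x ⊕ ⊖y).
Lemma eqv_refl x : eqv x x. Proof. by rewrite /eqv baddNr; apply: I0. Qed.
Lemma eqv_eq x y : x = y -> eqv x y. Proof. by move=> ->; apply: eqv_refl. Qed.
Lemma eqv_sym x y : eqv x y -> eqv y x.
Proof. by rewrite /eqv => h; have := Iopp h; rewrite oppD oppK. Qed.
Lemma eqv_trans x y z : eqv x y -> eqv y z -> eqv x z.
Proof. by rewrite /eqv => h1 h2; have := Iadd h1 h2; rewrite baddA addNKr. Qed.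
Lemma eqvE x y : eqv x y <-> I (⊖y ⊕ x).
Proof.
rewrite /eqv; split=> h.
- by have := IconjN y h; rewrite baddA addNKr.
- by have := Iconj y h; rewrite addNKl.
Qed.
Lemma eqv_I x y : I x -> eqv y x -> I y.
Proof. by rewrite /eqv => hx h; have := Iadd h hx; rewrite addNKr. Qed.
Lemma I_eqv0 x : I x <-> eqv x (bzero B).
Proof. by rewrite /eqv opp0 badd0r. Qed.

Lemma addM x x' y y' : eqv x x' -> eqv y y' -> eqv (x ⊕ y) (x' ⊕ y').
Proof.
rewrite /eqv => hx hy.
have := Iadd (Iconj x hy) hx.
by rewrite oppD !baddA addNKr.
Qed.
Lemma oppM x x' : eqv x x' -> eqv (⊖x) (⊖x').
Proof. move=> h; apply/eqvE; rewrite oppK; exact: (eqv_sym h). Qed.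

Lemma mulMl x y y' : eqv y y' -> eqv (x ⊙ y) (x ⊙ y').
Proof.
move/eqvE=> h; apply/eqvE.
have -> : x ⊙ y = x ⊙ y' ⊕ blambda x (⊖y' ⊕ y).
  by rewrite /blambda baddA -brace_law addNKl.
by rewrite addKl; apply: Ilam.
Qed.

Lemma mulMr x x' y : eqv x x' -> eqv (x ⊙ y) (x' ⊙ y).
Proof.
move=> h.
have hj : I (binv x' ⊙ x).
  have : I (blambda x' (binv x' ⊙ x)).
    by rewrite /blambda bmulA bmulVr bmul1l; apply/eqvE.
  by move/(Ilam (binv x')); rewrite lamK.
have hj' := Imconj (binv y) hj.
rewrite invK in hj'.
have -> : x ⊙ y = x' ⊙ y ⊙ (binv y ⊙ (binv x' ⊙ x) ⊙ y).
  by rewrite !bmulA mulKr bmulVr bmul1l.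
have e1 : eqv (binv y ⊙ (binv x' ⊙ x) ⊙ y) (bone B).
  by rewrite one0; apply: (proj1 (I_eqv0 _)).
apply: eqv_trans (mulMl (x' ⊙ y) e1) _.
by rewrite bmul1r; apply: eqv_refl.
Qed.

Lemma mulM x x' y y' : eqv x x' -> eqv y y' -> eqv (x ⊙ y) (x' ⊙ y').
Proof. move=> hx hy; exact: eqv_trans (mulMr y hx) (mulMl x' hy). Qed.

Lemma invM x x' : eqv x x' -> eqv (binv x) (binv x').
Proof.
move=> h.
have e : eqv (binv x ⊙ x' ⊙ binv x') (binv x ⊙ x ⊙ binv x').
  by apply: mulMr; apply: mulMl; apply: eqv_sym.
by rewrite mulKr bmulVl bmul1l in e.
Qed.


Section Cyc.
Hypothesis HA : abelian_quot (fun _ => True) I.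
Hypothesis Hmax : maximal_ideal I.

Lemma comm a b : eqv (a ⊕ b) (b ⊕ a).
Proof.
have [h _ _] := @HA (⊖a) (⊖b) Logic.I Logic.I.
by rewrite !oppK in h; rewrite /eqv oppD !baddA.
Qed.
Lemma mulE a b : eqv (a ⊙ b) (a ⊕ b).
Proof. by have [_ _ h] := @HA a b Logic.I Logic.I. Qed.
Lemma invE a : eqv (binv a) (⊖a).
Proof.
apply: (eqv_trans (eqv_eq (esym (addKl a (binv a))))).
apply: eqv_trans (addM (eqv_refl (⊖a)) (eqv_sym (mulE a (binv a)))) _.
by rewrite bmulVr one0 badd0r; apply: eqv_refl.
Qed.

Definition H (h : B) x := exists k l, eqv x (bnat_mul k h ⊕ ⊖ bnat_mul l h).

Lemma H_eqv h x y : H h x -> eqv y x -> H h y.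
Proof. by move=> [k [l e]] e'; exists k, l; apply: eqv_trans e' e. Qed.

Lemma psi_sub (h : B) k l k' l' :
  eqv (bnat_mul k h ⊕ ⊖ bnat_mul l h ⊕ ⊖ (bnat_mul k' h ⊕ ⊖ bnat_mul l' h))
      (bnat_mul (k + l') h ⊕ ⊖ bnat_mul (l + k') h).
Proof.
rewrite oppD oppK !bnat_mulD oppD.
rewrite -baddA.
apply: eqv_trans (addM (eqv_refl _) (comm _ _)) _.
by rewrite !baddA; apply: eqv_refl.
Qed.

Lemma H0 h : H h (bzero B).
Proof. by exists 0, 0; rewrite /= opp0 badd0r; apply: eqv_refl. Qed.

Lemma Hsub h x y : H h x -> H h y -> H h (x ⊕ ⊖y).
Proof.
move=> [k [l ex]] [k' [l' ey]]; exists (k + l'), (l + k').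
apply: eqv_trans (psi_sub h k l k' l'); exact: addM ex (oppM ey).
Qed.

Lemma H_ideal h : ideal (H h).
Proof.
split=> //; split; first exact: H0.
split; first exact: Hsub.
split.
  move=> x y hx hy; apply: H_eqv (Hsub hx hy) _.
  exact: eqv_trans (mulE _ _) (addM (eqv_refl _) (invE _)).
split.
  move=> s x _ hx; apply: H_eqv hx _.
  apply: eqv_trans (addM (comm s x) (eqv_refl _)) _.
  rewrite addKr; exact: eqv_refl.
split.
  move=> s x _ hx; apply: H_eqv hx _.
  apply: eqv_trans (mulE _ _) _.
  apply: eqv_trans (addM (mulE s x) (invE s)) _.
  apply: eqv_trans (addM (comm s x) (eqv_refl _)) _.
  rewrite addKr; exact: eqv_refl.
move=> s x _ hx; apply: H_eqv hx _.
rewrite /blambda.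
apply: eqv_trans (addM (eqv_refl _) (mulE s x)) _.
rewrite addKl; exact: eqv_refl.
Qed.

Lemma max_use J g : ideal J -> (forall x, I x -> J x) -> ~ J g -> forall x, J x -> I x.
Proof. case: Hmax => _ _ h hJ hIJ hg; apply: h => //; by exists g. Qed.

Lemma I_H h x : I x -> H h x.
Proof. move=> hx; exists 0, 0; rewrite /= opp0 badd0r; exact: (proj1 (I_eqv0 _)). Qed.

Lemma H_self h : H h h.
Proof. by exists 1, 0; rewrite /= badd0l opp0 badd0r; apply: eqv_refl. Qed.

Section G.
Variable g : B.
Hypothesis Hg : ~ I g.

Lemma sub_nat k l : l <= k -> bnat_mul k g ⊕ ⊖ bnat_mul l g = bnat_mul (k - l) g.
Proof. by move=> lk; rewrite -{1}(subnK lk) bnat_mulD addKr. Qed.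

Lemma eqv_nat_I k l : l <= k -> eqv (bnat_mul k g) (bnat_mul l g) -> I (bnat_mul (k - l) g).
Proof. by move=> lk; rewrite /eqv sub_nat. Qed.

Lemma dichot d : I (bnat_mul d g) \/
  exists k l, eqv (bnat_mul (l * d).+1 g) (bnat_mul (k * d) g).
Proof.
case: (classic (H (bnat_mul d g) g)) => [[k [l e]]|hn]; [right|left].
  exists k, l.
  rewrite !bnat_mulM in e.
  have e2 := addM e (eqv_refl (bnat_mul (l * d) g)).
  rewrite addNKr in e2.
  apply: eqv_trans _ e2; rewrite /=; exact: comm.
apply: (max_use (H_ideal (bnat_mul d g)) (@I_H (bnat_mul d g)) hn).
by exists 1, 0; rewrite /= badd0l opp0 badd0r; apply: eqv_refl.
Qed.

Lemma exN : exists N, 0 < N /\ I (bnat_mul N g).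
Proof.
case: (dichot 2) => [h|[k [l e]]]; first by exists 2.
case: (leqP (k * 2) (l * 2).+1) => hkl.
  exists ((l * 2).+1 - k * 2); split; first lia.
  exact: eqv_nat_I hkl e.
exists (k * 2 - (l * 2).+1); split; first lia.
exact: eqv_nat_I (ltnW hkl) (eqv_sym e).
Qed.

Section Ord.
Variable m : nat.
Hypothesis m0 : 0 < m.
Hypothesis Im : I (bnat_mul m g).
Hypothesis mmin : forall k, k < m -> ~ (0 < k /\ I (bnat_mul k g)).

Lemma I_mult q : I (bnat_mul (q * m) g).
Proof.
rewrite -bnat_mulM; elim: q => [|q IH] /=; first exact: I0.
exact: Iadd IH Im.
Qed.

Lemma I_dvd N : I (bnat_mul N g) -> m %| N.
Proof.
move=> hN.
have hr : I (bnat_mul (N %% m) g).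
  have e : bnat_mul N g = bnat_mul (N %/ m * m) g ⊕ bnat_mul (N %% m) g.
    by rewrite -bnat_mulD -divn_eq.
  have := Iadd (Iopp (I_mult (N %/ m))) hN.
  by rewrite e addKl.
case: (posnP (N %% m)) => [h0|hpos]; first by rewrite /dvdn h0.
by exfalso; apply: (mmin (ltn_pmod N m0)); split.
Qed.

Lemma eqv_mod k l : eqv (bnat_mul k g) (bnat_mul l g) -> k = l %[mod m].
Proof.
move=> e; case: (leqP l k) => hlk.
  rewrite -(subnK hlk); have [q ->] := dvdnP (I_dvd (eqv_nat_I hlk e)).
  by rewrite modnMDl.
symmetry; have hlk' := ltnW hlk.
rewrite -(subnK hlk'); have [q ->] := dvdnP (I_dvd (eqv_nat_I hlk' (eqv_sym e))).
by rewrite modnMDl.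
Qed.

Lemma eqv_modE N : eqv (bnat_mul N g) (bnat_mul (N %% m) g).
Proof.
rewrite {1}(divn_eq N m) bnat_mulD.
rewrite /eqv addKr; exact: I_mult.
Qed.

Lemma m_gt1 : 1 < m.
Proof.
have : m != 1.
  apply/eqP => e; apply: Hg; have := Im; rewrite e /= badd0l; done.
lia.
Qed.

Lemma m_prime : prime m.
Proof.
apply/primeP; split; first exact: m_gt1.
move=> d dm.
have d0 : 0 < d.
  case: (posnP d) => // h; move: dm; rewrite h dvd0n => /eqP hm; lia.
case: (dichot d) => [hd|[k [l e]]].
  apply/orP; right; rewrite eqn_dvd dm /=; exact: I_dvd hd.
apply/orP; left.
have := eqv_mod e.
move/(congr1 (modn^~ d)); rewrite !modn_dvdm //.
rewrite -addn1 modnMDl modnMl => h.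
apply/eqP; apply: anti_leq; rewrite d0 andbT.
case: (leqP d 1) => // h1.
by rewrite (modn_small h1) in h.
Qed.

Lemma Hall b : H g b.
Proof.
apply: NNPP => hb.
apply: Hg; apply: (max_use (H_ideal g) (@I_H g) hb).
exact: H_self.
Qed.

Lemma cyc : quot_add_cyclic_of_order I m.
Proof.
exists g; split.
  move=> b; have [k [l e]] := Hall b.
  exists ((k + l * (m - 1)) %% m); first exact: ltn_pmod.
  change (eqv b (bnat_mul ((k + l * (m - 1)) %% m) g)).
  apply: eqv_trans e _.
  apply: eqv_trans _ (eqv_modE _).
  rewrite bnat_mulD; apply: addM (eqv_refl _) _.
  rewrite /eqv -oppD -bnat_mulD; apply: Iopp.
  have -> : l * (m - 1) + l = l * m by rewrite -mulnSr subn1 prednK.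
  exact: I_mult.
move=> k l hk hl e.
have := eqv_mod e.
by rewrite !modn_small.
Qed.

End Ord.

Lemma cyc_main : exists p, prime p /\ quot_add_cyclic_of_order I p.
Proof.
have [m [[m0 Im] mmin]] := ex_min exN.
exists m; split; first by apply: m_prime.
by apply: cyc.
Qed.

End G.

Lemma quot_cyclic : exists p, prime p /\ quot_add_cyclic_of_order I p.
Proof. case: Hmax => _ [g hg] _; exact: (cyc_main hg). Qed.

End Cyc.
Section Sol.
Hypothesis Hmax : maximal_ideal I.
Variables (n : nat) (Ic : nat -> B -> Prop).
Hypothesis Hc0 : forall x, Ic 0 x.
Hypothesis Hcn : forall x, Ic n x <-> x = bzero B.
Hypothesis Hcs : forall i, i < n ->
  ideal_in (Ic i) (Ic i.+1) /\ abelian_quot (Ic i) (Ic i.+1).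

Definition J k x := exists y, Ic k y /\ eqv x y.

Lemma J_ideal k : k < n -> (forall x, J k x) -> ideal (J k.+1).
Proof.
move=> kn hJ; have [hid _] := Hcs kn.
case: hid => hsub [h0 [hs [hm [hc [hmc hl]]]]].
split=> //; split.
  exists (bzero B); split; [exact: h0 | exact: eqv_refl].
split.
  move=> x y [x' [hx ex]] [y' [hy ey]]; exists (bsub x' y'); split; first exact: hs.
  exact: addM ex (oppM ey).
split.
  move=> x y [x' [hx ex]] [y' [hy ey]]; exists (x' ⊙ binv y'); split; first exact: hm.
  exact: mulM ex (invM ey).
split.
  move=> s x _ [x' [hx ex]]; have [s' [hs' es]] := hJ s.
  exists (s' ⊕ x' ⊕ ⊖s'); split; first exact: hc.
  exact: addM (addM es ex) (oppM es).
split.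
  move=> s x _ [x' [hx ex]]; have [s' [hs' es]] := hJ s.
  exists (s' ⊙ x' ⊙ binv s'); split; first exact: hmc.
  exact: mulM (mulM es ex) (invM es).
move=> s x _ [x' [hx ex]]; have [s' [hs' es]] := hJ s.
exists (blambda s' x'); split; first exact: hl.
exact: addM (oppM es) (mulM es ex).
Qed.

Lemma descent d k : k + d = n -> (forall x, J k x) ->
  exists k, k < n /\ (forall x, J k x) /\ (forall x, J k.+1 x -> I x).
Proof.
elim: d k => [|d IH] k hk hJ.
  exfalso; case: Hmax => _ [x hx] _; apply: hx.
  have [y [hy e]] := hJ x; rewrite addn0 in hk; rewrite hk in hy.
  move/Hcn: hy => hy; rewrite hy in e; exact: (proj2 (I_eqv0 _) e).
have kn : k < n by lia.
case: (classic (forall x, J k.+1 x)) => [hall|hno].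
  by apply: (IH k.+1) => //; lia.
exists k; split => //; split => //.
case: Hmax => _ _ hmx; apply: (hmx (J k.+1)).
- exact: J_ideal.
- have [[_ [h0 _]] _] := Hcs kn.
  move=> x hx; exists (bzero B); split; [exact: h0 | exact: (proj1 (I_eqv0 _) hx)].
- exact: not_all_ex_not hno.
Qed.

Lemma abel : abelian_quot (fun _ => True) I.
Proof.
have [k [kn [hJ hJI]]] := descent (d:=n) (k:=0) (add0n n)
  (fun x => ex_intro _ x (conj (Hc0 x) (eqv_refl x))).
move=> a b _ _.
have [a' [ha ea]] := hJ a; have [b' [hb eb]] := hJ b.
have [_ hab] := Hcs kn.
have [h1 h2 h3] := hab a' b' ha hb.
have toI : forall z, Ic k.+1 z -> I z.
  by move=> z hz; apply: hJI; exists z; split => //; exact: eqv_refl.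
split.
- apply: eqv_I (toI _ h1) _.
  exact: addM (addM (addM (oppM ea) (oppM eb)) ea) eb.
- apply: eqv_I (toI _ h2) _.
  exact: mulM (mulM (mulM (invM ea) (invM eb)) ea) eb.
- apply: eqv_I (toI _ h3) _.
  exact: addM (mulM ea eb) (oppM (addM ea eb)).
Qed.

End Sol.
End Main.

Theorem corollary4p6 (B : skew_brace) (I : B -> Prop) :
  soluble B -> maximal_ideal I ->
  abelian_quot (fun _ => True) I /\
  exists p : nat, prime p /\ quot_add_cyclic_of_order I p.
Proof.
move=> [n [Ic [h0 hn hs]]] hm.
have HI : ideal I by case: hm.
have HA : abelian_quot (fun _ => True) I by exact: (abel HI hm h0 hn hs).
split => //; exact: (quot_cyclic HI HA hm).
Qed.
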